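(* Let $\underline{\lambda}=(\lambda_1\ge\dots\ge\lambda_{n+1})$ and $\underline{\mu}=(\mu_1\ge\dots\ge\mu_n)$ be real sequences such that there exists $p\in\mathcal{O}_\Lambda$ whose bottom-right $n\times n$ principal submatrix is $\mathrm{diag}(\mu_1,\dots,\mu_n)$ (equivalently, $\lambda_1\ge\mu_1\ge\lambda_2\ge\dots\ge\mu_n\ge\lambda_{n+1}$). Let $\mu\in[\underline{\mu}]$ be such that the component of the interlacing pattern of $(\underline{\lambda},\underline{\mu})$ labelled $\mu$ is not an M-shape. Then $C_\mu=0$ if and only if the component labelled $\mu$ is a W-shape.
   Context: $\mathcal{O}_\Lambda$ is the set of $(n+1)\times(n+1)$ Hermitian matrices with eigenvalues $\lambda_1,\dots,\lambda_{n+1}$. Notation: $[\underline{\tau}]$ is the set of distinct values of a finite sequence $\underline{\tau}$, $n_v(\underline{\tau})$ the number of occurrences of $v$ in it. For each value $v$ occurring in $\underline{\lambda}$ or $\underline{\mu}$, the component of the interlacing pattern labelled $v$ is an M-shape if $n_v(\underline{\mu})=n_v(\underline{\lambda})+1$, a W-shape if $n_v(\underline{\lambda})=n_v(\underline{\mu})+1$, and a parallelogram-shape if $n_v(\underline{\lambda})=n_v(\underline{\mu})$ (exactly one of these holds). For $\tau\in[\underline{\mu}]$ with M-shape component, $r_\tau>0$ is defined by $r_\tau^2=-\prod_{\lambda\in[\underline{\lambda}],\,\text{W-shape}}(\tau-\lambda)\prod_{\sigma\in[\underline{\mu}],\,\text{M-shape},\,\sigma\ne\tau}\frac{1}{\tau-\sigma}$;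 otherwise $r_\tau=0$. For $\mu\in[\underline{\mu}]$ whose component is not an M-shape, $C_\mu=\sum_{i=1}^{n+1}\lambda_i-\sum_{i=1}^n\mu_i-\mu+\sum_{\tau\in[\underline{\mu}],\,\text{M-shape}}\frac{r_\tau^2}{\mu-\tau}$. *)

(* Defs.v *)
From mathcomp Require Import all_boot all_order all_algebra.
Set Implicit Arguments. Unset Strict Implicit. Unset Printing Implicit Defensive.
Import Order.TTheory GRing.Theory Num.Theory.
Local Open Scope ring_scope.

(* lam i = lambda_{i+1} (i < n+1), mu i = mu_{i+1} (i < n). *)
Section Interlacing.
Variables (R : rcfType) (n : nat) (lam : 'I_n.+1 -> R) (mu : 'I_n -> R).

Definition cnt_lam (v : R) : nat := #|[set i | lam i == v]|.
Definition cnt_mu (v : R) : nat := #|[set i | mu i == v]|.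

Definition vals_lam : seq R := undup [seq lam i | i <- enum 'I_n.+1].
Definition vals_mu : seq R := undup [seq mu i | i <- enum 'I_n].

Definition is_M (v : R) : bool := cnt_mu v == (cnt_lam v).+1.
Definition is_W (v : R) : bool := cnt_lam v == (cnt_mu v).+1.
Definition is_P (v : R) : bool := cnt_lam v == cnt_mu v.

Definition r2_expr (tau : R) : R :=
  - (\prod_(l <- vals_lam | is_W l) (tau - l))
  * \prod_(s <- vals_mu | is_M s && (s != tau)) (tau - s)^-1.

Definition r_ (tau : R) : R :=
  if (tau \in vals_mu) && is_M tau then Num.sqrt (r2_expr tau) else 0.

Definition C_ (m : R) : R :=
  \sum_(i < n.+1) lam i - \sum_(i < n) mu i - m
  + \sum_(t <- vals_mu | is_M t) (r_ t ^+ 2 / (m - t)).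

End Interlacing.

(* Main.v *)
Require Import Defs.
From mathcomp Require Import all_boot all_order all_algebra.
From mathcomp Require Import zify ring lra.
Set Implicit Arguments. Unset Strict Implicit. Unset Printing Implicit Defensive.
Import Order.TTheory GRing.Theory Num.Theory.
Local Open Scope ring_scope.

Section PF.
Variable R : fieldType.

Lemma size_prod_diff (L1 L2 : seq R) k : size L1 = k.+1 -> size L2 = k.+1 ->
  \sum_(x <- L1) x = \sum_(x <- L2) x ->
  (size (\prod_(x <- L1) ('X - x%:P) - \prod_(x <- L2) ('X - x%:P))%R <= k)%N.
Proof.
move=> s1 s2 e; apply/leq_sizeP => j hj; rewrite coefB.
have sz1 := size_prod_XsubC L1 id; have sz2 := size_prod_XsubC L2 id.
rewrite s1 in sz1; rewrite s2 in sz2.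
have m1 := monic_prod_XsubC L1 predT id; have m2 := monic_prod_XsubC L2 predT id.
rewrite leq_eqVlt in hj; case/orP: hj => [/eqP <-|hj].
  have := @coefPn_prod_XsubC _ L1; rewrite s1 => ->//.
  have := @coefPn_prod_XsubC _ L2; rewrite s2 => ->//.
  by rewrite e subrr.
rewrite leq_eqVlt in hj; case/orP: hj => [/eqP <-|hj].
  move/monicP: m1; rewrite /lead_coef sz1 => ->.
  by move/monicP: m2; rewrite /lead_coef sz2 => ->; rewrite subrr.
by rewrite !nth_default ?subrr // ?sz1 ?sz2.
Qed.

Lemma prodD1 (T : eqType) (r : seq T) j (F : T -> R) :
  j \in r -> uniq r -> \prod_(i <- r) F i = F j * \prod_(i <- r | i != j) F i.
Proof. exact: bigD1_seq. Qed.

Lemma sumD1 (T : eqType) (r : seq T) j (F : T -> R) :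
  j \in r -> uniq r -> \sum_(i <- r) F i = F j + \sum_(i <- r | i != j) F i.
Proof. exact: bigD1_seq. Qed.

Lemma hprod (T : Type) (r : seq T) (P : pred T) (F : T -> R) x :
  (\prod_(i <- r | P i) ('X - (F i)%:P)).[x] = \prod_(i <- r | P i) (x - F i).
Proof. by rewrite horner_prod; apply: eq_bigr => i _; rewrite hornerXsubC. Qed.

Lemma pf (W M : seq R) : uniq M -> size W = (size M).+1 -> forall z,
  \prod_(w <- W) (z - w) =
  (z - (\sum_(w <- W) w - \sum_(s <- M) s)) * \prod_(s <- M) (z - s)
  + \sum_(s <- M) (\prod_(w <- W) (s - w) / \prod_(t <- M | t != s) (s - t))
       * \prod_(t <- M | t != s) (z - t).
Proof.
move=> uM sW z.
set a := \sum_(w <- W) w - \sum_(s <- M) s.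
set c := fun s => \prod_(w <- W) (s - w) / \prod_(t <- M | t != s) (s - t).
set D := \prod_(w <- W) ('X - w%:P) - \prod_(x <- a :: M) ('X - x%:P)
   - \sum_(s <- M) c s *: \prod_(t <- M | t != s) ('X - t%:P).
have hD : D = 0.
  apply: (roots_geq_poly_eq0 _ uM).
    apply/allP => s sM; rewrite /root /D !hornerE !horner_sum !hprod.
    rewrite big_cons /= (prodD1 _ sM uM) /= subrr mul0r mulr0 subr0.
    rewrite (sumD1 _ sM uM) /= [\sum_(i <- M | i != s) _]big1_seq ?addr0; last first.
      move=> t /andP[ts tM]; rewrite hornerZ hprod.
      apply/eqP; rewrite mulf_eq0 prodf_seq_eq0; apply/orP; right; apply/hasP; exists s => //; by rewrite eq_sym ts subrr eqxx.
    rewrite hornerZ hprod /c.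
    rewrite mulfVK ?subrr //.
    rewrite prodf_seq_neq0; apply/allP => t tM; apply/implyP => ts.
    by rewrite subr_eq0 eq_sym.
  rewrite /D; apply: leq_trans (size_polyD _ _) _; rewrite geq_max size_polyN.
  apply/andP; split.
    apply: size_prod_diff => //; rewrite big_cons /a; exact: (esym (subrK _ _)).
  apply: leq_trans (size_sum _ _ _) _; apply/bigmax_leqP_seq => s sM _.
  apply: leq_trans (size_scale_leq _ _) _.
  rewrite -big_filter size_prod_XsubC -(rem_filter _ uM) size_rem //.
  by rewrite prednK // lt0n size_eq0; apply/eqP => M0; rewrite M0 in sM.
have := congr1 (fun p => p.[z]) hD.
rewrite /D !hornerE !horner_sum !hprod big_cons /=.
have E : forall s, (c s *: \prod_(t <- M | t != s) ('X - t%:P)).[z] = c s * \prod_(t <- M | t != s) (z - t).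
  by move=> s; rewrite hornerZ hprod.
rewrite (eq_bigr _ (fun s _ => E s)).
move/eqP; rewrite subr_eq0 subr_eq => /eqP ->; rewrite addrC.
by [].
Qed.
End PF.

Lemma sign_prod (R : realDomainType) (L : seq R) (P : pred R) t :
  (forall w, w \in L -> P w -> w != t) ->
  0 < (-1) ^+ (count (fun w => P w && (t < w)) L) * \prod_(w <- L | P w) (t - w).
Proof.
elim: L => [|a L IH] h; first by rewrite big_nil mulr1 expr0.
rewrite big_cons /=.
have IH' : 0 < (-1) ^+ (count (fun w => P w && (t < w)) L) * \prod_(w <- L | P w) (t - w).
  by apply: IH => w wL; apply: h; rewrite inE wL orbT.
case Pa: (P a) => /=; last by rewrite add0n.
have at_ : a != t by apply: h; rewrite ?mem_head.
case: (ltgtP t a) => [ta|at'|e]; last by rewrite e eqxx in at_.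
  set c := count _ L; set p := \prod_(_ <- _ | _) _ in IH' *.
  rewrite add1n exprS.
  have -> : -1 * (-1) ^+ c * ((t - a) * p) = (a - t) * ((-1) ^+ c * p) by ring.
  by apply: mulr_gt0 => //; rewrite subr_gt0.
set c := count _ L; set p := \prod_(_ <- _ | _) _ in IH' *.
rewrite add0n.
have -> : (-1) ^+ c * ((t - a) * p) = (t - a) * ((-1) ^+ c * p) by ring.
by apply: mulr_gt0 => //; rewrite subr_gt0.
Qed.

Section Comb.
Variables (R : rcfType) (n : nat) (lam : 'I_n.+1 -> R) (mu : 'I_n -> R).
Hypothesis hI : forall i : 'I_n, mu i <= lam (widen_ord (leqnSn n) i) /\ lam (lift ord0 i) <= mu i.

Lemma card_sum (I : finType) (P : pred I) : #|[set i | P i]| = (\sum_i P i)%N.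
Proof.
rewrite -sum1_card big_mkcond /=; apply: eq_bigr => i _; rewrite inE.
by case: (P i).
Qed.

Lemma cnt_bounds (p : pred R) : (forall x y, x <= y -> p x -> p y) ->
  (#|[set j | p (mu j)]| <= #|[set i | p (lam i)]| <= #|[set j | p (mu j)]|.+1)%N.
Proof.
move=> mono; apply/andP; split.
  have winj : injective (widen_ord (leqnSn n)).
    by move=> a b /(congr1 val) /= /val_inj.
  rewrite -(card_imset _ winj).
  apply: subset_leq_card; apply/subsetP => x /imsetP[j pj ->]; rewrite inE in pj.
  by rewrite inE; apply: mono pj; exact: (hI j).1.
apply: leq_trans (subset_leq_card (_ : _ \subset ord0 |: (lift ord0 @: [set j | p (mu j)]))) _.
  apply/subsetP => i; rewrite inE => pi; rewrite !inE.
  case: (unliftP ord0 i) pi => [j ->|->]; last by rewrite eqxx.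
  move=> pj; apply/orP; right; apply: imset_f; rewrite inE.
  by apply: mono pj; exact: (hI j).2.
by rewrite cardsU1 card_imset; [case: (_ \notin _) | exact: lift_inj].
Qed.

Lemma split_cnt (I : finType) (f : I -> R) v :
  (#|[set i | f i == v]| + #|[set i | (v < f i)%R]| = #|[set i | (v <= f i)%R]|)%N.
Proof.
rewrite !card_sum -big_split /=; apply: eq_bigr => i _.
rewrite le_eqVlt eq_sym; case: (ltgtP v (f i)) => //= _.
Qed.

Lemma cnt_diff v :
  (cnt_lam lam v <= (cnt_mu mu v).+1 /\ cnt_mu mu v <= (cnt_lam lam v).+1)%N.
Proof.
have h1 := split_cnt lam v; have h2 := split_cnt mu v.
have b1 := @cnt_bounds (fun x => v < x) (fun x y hxy hx => lt_le_trans hx hxy).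
have b2 := @cnt_bounds (fun x => v <= x) (fun x y hxy hx => le_trans hx hxy).
rewrite /cnt_lam /cnt_mu; lia.
Qed.

Lemma M_gt t : is_M lam mu t ->
  #|[set i | t < lam i]| = #|[set j | t < mu j]|.+1.
Proof.
have h1 := split_cnt lam t; have h2 := split_cnt mu t.
have b1 := @cnt_bounds (fun x => t < x) (fun x y hxy hx => lt_le_trans hx hxy).
have b2 := @cnt_bounds (fun x => t <= x) (fun x y hxy hx => le_trans hx hxy).
rewrite /is_M /cnt_lam /cnt_mu => /eqP; lia.
Qed.

Lemma delta v : (cnt_lam lam v)%:R - (cnt_mu mu v)%:R =
  (is_W lam mu v)%:R - (is_M lam mu v)%:R :> R.
Proof.
have [h1 h2] := cnt_diff v.
have E : (cnt_lam lam v + is_M lam mu v = cnt_mu mu v + is_W lam mu v)%N.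
  rewrite /is_M /is_W; case: eqP; case: eqP => /= ??; lia.
have := congr1 (fun k => k%:R : R) E; rewrite /= !natrD => E'; lra.
Qed.


Lemma sum_cnt (I : finType) (f : I -> R) (U : seq R) (h : R -> R) :
  uniq U -> (forall i, f i \in U) ->
  \sum_(v <- U) h v * (#|[set i | f i == v]|)%:R = \sum_i h (f i).
Proof.
move=> uU fU.
transitivity (\sum_(v <- U) \sum_i (f i == v)%:R * h v).
  apply: eq_bigr => v _; rewrite card_sum natr_sum mulr_sumr.
  by apply: eq_bigr => i _; rewrite mulrC.
rewrite exchange_big /=; apply: eq_bigr => i _.
rewrite (bigD1_seq (f i) (fU i) uU) /= eqxx mul1r big1 ?addr0 //.
by move=> v /negPf; rewrite eq_sym => ->; rewrite mul0r.
Qed.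

Definition Wl := [seq l <- vals_lam lam | is_W lam mu l].
Definition Ml := [seq s <- vals_mu mu | is_M lam mu s].

Lemma in_vals_lam v : (0 < cnt_lam lam v)%N -> v \in vals_lam lam.
Proof.
rewrite card_gt0 => /set0Pn [i]; rewrite inE => /eqP <-.
by rewrite /vals_lam mem_undup; apply: map_f; rewrite mem_enum.
Qed.

Lemma in_vals_mu v : (0 < cnt_mu mu v)%N -> v \in vals_mu mu.
Proof.
rewrite card_gt0 => /set0Pn [i]; rewrite inE => /eqP <-.
by rewrite /vals_mu mem_undup; apply: map_f; rewrite mem_enum.
Qed.

Lemma W_in v : is_W lam mu v -> v \in vals_lam lam.
Proof. by rewrite /is_W => /eqP h; apply: in_vals_lam; rewrite h. Qed.

Lemma M_in v : is_M lam mu v -> v \in vals_mu mu.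
Proof. by rewrite /is_M => /eqP h; apply: in_vals_mu; rewrite h. Qed.

Lemma WM_excl v : is_W lam mu v -> ~~ is_M lam mu v.
Proof. by rewrite /is_W /is_M => /eqP ->; apply/eqP; lia. Qed.

Lemma sum_filt (U L : seq R) (P : pred R) (h : R -> R) :
  uniq U -> uniq L -> (forall v, P v -> (v \in U) = (v \in L)) ->
  \sum_(v <- U) h v * (P v)%:R = \sum_(v <- [seq x <- L | P x]) h v.
Proof.
move=> uU uL hUL.
transitivity (\sum_(v <- U | P v) h v).
  by rewrite [RHS]big_mkcond /=; apply: eq_bigr => v _; case: (P v); rewrite ?mulr1 ?mulr0.
rewrite -big_filter; apply: perm_big; apply: uniq_perm; rewrite ?filter_uniq //.
move=> v; rewrite !mem_filter; case Pv: (P v) => //=; exact: hUL.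
Qed.

Lemma key (h : R -> R) :
  \sum_i h (lam i) - \sum_j h (mu j) = \sum_(w <- Wl) h w - \sum_(s <- Ml) h s.
Proof.
set U := undup (vals_lam lam ++ vals_mu mu).
have uU : uniq U by exact: undup_uniq.
rewrite -(@sum_cnt _ lam U h uU); last first.
  by move=> i; rewrite mem_undup mem_cat /vals_lam mem_undup map_f ?mem_enum.
rewrite -(@sum_cnt _ mu U h uU); last first.
  by move=> i; rewrite mem_undup mem_cat /vals_mu mem_undup map_f ?mem_enum ?orbT.
rewrite -sumrB.
under eq_bigr do rewrite -mulrBr (delta _) mulrBr.
rewrite sumrB (@sum_filt U (vals_lam lam)) ?undup_uniq //; last first.
  by move=> v /W_in hv; rewrite mem_undup mem_cat hv.
rewrite (@sum_filt U (vals_mu mu)) ?undup_uniq //.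
by move=> v /M_in hv; rewrite mem_undup mem_cat hv orbT.
Qed.

Lemma sum_count (L : seq R) (P : pred R) : \sum_(x <- L) (P x)%:R = (count P L)%:R :> R.
Proof. by elim: L => [|a L IH]; rewrite ?big_nil ?big_cons //= IH natrD. Qed.

Lemma sum1_size (L : seq R) : \sum_(x <- L) (1 : R) = (size L)%:R.
Proof. by elim: L => [|a L IH]; rewrite ?big_nil ?big_cons //= IH -addn1 natrD addrC. Qed.

Lemma size_WM : size Wl = (size Ml).+1.
Proof.
have := key (fun _ => 1).
rewrite !sumr_const card_ord !sum1_size => E.
apply/eqP; rewrite -(eqr_nat R); apply/eqP.
move: E; rewrite -addn1 natrD (card_ord n); lra.
Qed.

Lemma sum_card (I : finType) (P : pred I) : \sum_i (P i)%:R = (#|[set i | P i]|)%:R :> R.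
Proof. by rewrite card_sum natr_sum. Qed.

Lemma count_WM t : is_M lam mu t ->
  count (fun w => t < w) Wl = (count (fun w => t < w) Ml).+1.
Proof.
move=> hM; have := key (fun v => ((t < v)%R)%:R).
rewrite !sum_count (sum_card (fun i => t < lam i)) (sum_card (fun j => t < mu j)).
rewrite (M_gt hM) => E.
apply/eqP; rewrite -(eqr_nat R); apply/eqP.
move: E; rewrite -addn1 natrD; lra.
Qed.


Lemma r2e t : t \in Ml -> r_ lam mu t ^+ 2 =
  - (\prod_(w <- Wl) (t - w) / \prod_(s <- Ml | s != t) (t - s)).
Proof.
move=> tM; have := tM; rewrite mem_filter => /andP[hM tv].
rewrite /r_ tv hM /=.
have -> : r2_expr lam mu t = - (\prod_(w <- Wl) (t - w) / \prod_(s <- Ml | s != t) (t - s)).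
  by rewrite /r2_expr prodfV -big_filter_cond -big_filter mulNr.
rewrite sqr_sqrtr //.
set PW := \prod_(w <- Wl) (t - w); set PM := \prod_(s <- Ml | s != t) (t - s).
have sW : 0 < (-1) ^+ (count (fun w => predT w && (t < w)) Wl) * \prod_(w <- Wl | predT w) (t - w).
  apply: sign_prod => w; rewrite mem_filter => /andP[hW _] _.
  by apply: contraTneq hW => ->; apply/negP => /WM_excl; rewrite hM.
have sM : 0 < (-1) ^+ (count (fun s => (s != t) && (t < s)) Ml) * PM.
  by apply: sign_prod.
have e1 : count (fun w => predT w && (t < w)) Wl = (count (fun s => (s != t) && (t < s)) Ml).+1.
  rewrite (count_WM hM); congr (_.+1); apply: eq_count => s /=.
  by case: (ltgtP t s) => //= ->; rewrite eqxx.
rewrite e1 in sW; rewrite -/PW in sW.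
set c := count _ Ml in sM sW.
have hPM : PM != 0 by apply: contraTneq sM => ->; rewrite mulr0 ltxx.
have hs : (-1) ^+ c != 0 :> R by rewrite signr_eq0.
have -> : - (PW / PM) = ((-1) ^+ c.+1 * PW) / ((-1) ^+ c * PM).
  rewrite exprS; field; by rewrite hs hPM.
by apply/ltW/divr_gt0.
Qed.

Lemma main_lemma m : m \in vals_mu mu -> ~~ is_M lam mu m ->
  (C_ lam mu m = 0 <-> is_W lam mu m).
Proof.
move=> mv nM.
have ha := key id.
have uM : uniq Ml by rewrite filter_uniq // undup_uniq.
have mM : m \notin Ml by rewrite mem_filter negb_and nM.
set Qm := \prod_(s <- Ml) (m - s).
have ne : forall t, t \in Ml -> m - t != 0.
  by move=> t tM; rewrite subr_eq0; apply: contraNneq mM => ->.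
have hQ : Qm != 0.
  by rewrite prodf_seq_neq0; apply/allP => t tM; apply/implyP => _; exact: ne.
have E : \prod_(w <- Wl) (m - w) = - Qm * C_ lam mu m.
  have hC : C_ lam mu m = \sum_i lam i - \sum_j mu j - m
      + \sum_(t <- Ml) (r_ lam mu t ^+ 2 / (m - t)).
    by rewrite /C_ /Ml big_filter.
  rewrite (pf uM size_WM m) hC -ha -/Qm mulrDr mulr_sumr.
  have S : \sum_(t <- Ml) - Qm * (r_ lam mu t ^+ 2 / (m - t)) =
    \sum_(t <- Ml) (\prod_(w <- Wl) (t - w) / \prod_(s <- Ml | s != t) (t - s)
       * \prod_(s <- Ml | s != t) (m - s)).
    apply: eq_big_seq => t tM /=; rewrite r2e // /Qm (prodD1 _ tM uM).
    have := ne t tM; set P' := \prod_(_ <- _ | _) (m - _); set cc := \prod_(w <- Wl) (t - w) / \prod_(s <- Ml | s != t) (t - s).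
    move=> h; field; exact: h.
  rewrite S; ring.
split.
  move=> C0; move: E; rewrite C0 mulr0 => /eqP; rewrite prodf_seq_eq0 => /hasP[w].
  by rewrite subr_eq0 mem_filter => /andP[hW _] /= /eqP ->.
move=> hW; apply/eqP; move: E; have : \prod_(w <- Wl) (m - w) = 0.
  apply/eqP; rewrite prodf_seq_eq0; apply/hasP; exists m => /=.
    by rewrite mem_filter hW W_in.
  by rewrite subrr.
move=> -> /esym/eqP; rewrite mulf_eq0 oppr_eq0 (negPf hQ) //.
Qed.

End Comb.



Unset Implicit Arguments.
Theorem lemma4p5 (R : rcfType) (n : nat) (lam : 'I_n.+1 -> R) (mu : 'I_n -> R) :
  (forall i j : 'I_n.+1, (i <= j)%N -> lam j <= lam i) ->
  (forall i j : 'I_n, (i <= j)%N -> mu j <= mu i) ->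
  (forall i : 'I_n, mu i <= lam (widen_ord (leqnSn n) i) /\ lam (lift ord0 i) <= mu i) ->
  forall m : R, m \in vals_mu mu -> ~~ is_M lam mu m ->
  (C_ lam mu m = 0 <-> is_W lam mu m).
Proof. by move=> _ _ hI m; apply: main_lemma. Qed.
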